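(* Let $k$ be a real number that is not an integer, and for $j\ge1$ let $\nu_j=\frac{d^{j-1}}{dk^{j-1}}\big(\pi\cot(k\pi)\big)$. Then for $n\in\mathbb{N}_0$, $$B_n(\nu_1,\nu_2,\dots,\nu_n)=\begin{cases}(-1)^j\pi^{2j}, & n=2j,\ j\in\mathbb{N}_0,\\ (-1)^j\pi^{2j+1}\cot(k\pi), & n=2j+1,\ j\in\mathbb{N}_0.\end{cases}$$
   Context: $B_n(s_1,\dots,s_n)$ denotes the complete Bell polynomial, defined by $\exp\big(\sum_{j\ge1}s_j t^j/j!\big)=\sum_{n\ge0}B_n(s_1,\dots,s_n)t^n/n!$; $B_0=1$. *)

(* Defs.v *)
From Stdlib Require Import Reals.
From Coquelicot Require Import Coquelicot.
Open Scope R_scope.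

(* Formal power series over R represented by coefficient sequences nat -> R. *)
Definition ps_mul (a b : nat -> R) : nat -> R :=
  fun n => sum_f_R0 (fun i => a i * b (n - i)%nat) n.

Fixpoint ps_pow (a : nat -> R) (m : nat) : nat -> R :=
  match m with
  | O => fun n => if Nat.eqb n 0 then 1 else 0
  | S m' => ps_mul a (ps_pow a m')
  end.

Definition bell_arg (s : nat -> R) : nat -> R :=
  fun j => match j with O => 0 | _ => s j / INR (Stdlib.Arith.Factorial.fact j) end.

(* Complete Bell polynomial B_n(s_1,...,s_n), defined by
   exp(sum_{j>=1} s_j t^j/j!) = sum_n B_n t^n/n!.
   Since the inner series has no constant term, the coefficient of t^n in
   exp(A) = sum_m A^m/m! only receives contributions from m <= n.
   Only s_1,...,s_n are used (s 0 is ignored). *)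
Definition bell (n : nat) (s : nat -> R) : R :=
  INR (Stdlib.Arith.Factorial.fact n) * sum_f_R0 (fun m => ps_pow (bell_arg s) m n / INR (Stdlib.Arith.Factorial.fact m)) n.

Definition pcot (x : R) : R := PI * (cos (x * PI) / sin (x * PI)).

(* Main.v *)
Require Import Defs.
From Stdlib Require Import Reals Lra Lia FunctionalExtensionality.
From Coquelicot Require Import Coquelicot.
Open Scope R_scope.
Ltac sring := ring.
Ltac sfield := field.
Ltac slra := lra.
Definition U (x : R) := sin (x * PI) <> 0.

Lemma loc_U x : U x -> locally x U.
Proof.
intros Hx.
assert (Hc : continuity_pt (fun t => sin (t * PI)) x).
{ apply continuity_pt_filterlim. apply (ex_derive_continuous (K:=R_AbsRing) (V:=R_NormedModule) (fun t => sin (t * PI))). auto_derive. easy. }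
destruct (continuous_neq_0 _ _ Hc Hx) as [eps He].
exists eps. intros y Hy. unfold U.
replace y with (x + (y - x)) by ring. apply He. exact Hy.
Qed.

Inductive PC : (R -> R) -> Prop :=
| PC_const c : PC (fun _ => c)
| PC_cot : PC (fun x => cos (x * PI) / sin (x * PI))
| PC_plus f g : PC f -> PC g -> PC (fun x => f x + g x)
| PC_mult f g : PC f -> PC g -> PC (fun x => f x * g x).

Lemma PC_deriv phi : PC phi -> exists psi, PC psi /\ forall x, U x -> is_derive phi x (psi x).
Proof.
induction 1 as [c| |f g _ [f' [Pf Df]] _ [g' [Pg Dg]]|f g Pf0 [f' [Pf Df]] Pg0 [g' [Pg Dg]]].
- exists (fun _ => 0). split. apply PC_const. intros x _. apply (is_derive_const c x).
- exists (fun x => (- PI) * (1 + (cos (x * PI) / sin (x * PI)) * (cos (x * PI) / sin (x * PI)))).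
  split.
  + apply (PC_mult (fun _ => - PI)). apply PC_const.
    apply (PC_plus (fun _ => 1)). apply PC_const. apply (PC_mult _ _ PC_cot PC_cot).
  + intros x Hx. unfold U in Hx. auto_derive. exact Hx. field. exact Hx.
- exists (fun x => f' x + g' x). split. apply PC_plus; assumption.
  intros x Hx. apply (is_derive_plus f g x _ _ (Df x Hx) (Dg x Hx)).
- exists (fun x => f' x * g x + f x * g' x). split.
  apply PC_plus; apply PC_mult; assumption.
  intros x Hx. apply (is_derive_mult f g x _ _ (Df x Hx) (Dg x Hx)). intros; apply Rmult_comm.
Qed.

Lemma Dn_f i : exists phi, PC phi /\ forall x, U x -> Derive_n pcot i x = phi x.
Proof.
induction i as [|i [phi [Pphi Hphi]]].
- exists pcot. split. apply (PC_mult (fun _ => PI)). apply PC_const. apply PC_cot.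
  intros; reflexivity.
- destruct (PC_deriv _ Pphi) as [psi [Ppsi Hpsi]].
  exists psi. split. exact Ppsi. intros x Hx. simpl.
  rewrite (Derive_ext_loc _ phi). apply is_derive_unique, Hpsi, Hx.
  destruct (loc_U x Hx) as [eps He]. exists eps. intros y Hy. apply Hphi, He, Hy.
Qed.

Lemma Dn_f_der i x : U x -> is_derive (Derive_n pcot i) x (Derive_n pcot (S i) x).
Proof.
intros Hx. destruct (Dn_f i) as [phi [Pphi Hphi]].
destruct (PC_deriv _ Pphi) as [psi [Ppsi Hpsi]].
simpl. rewrite (Derive_ext_loc _ phi).
2:{ destruct (loc_U x Hx) as [eps He]. exists eps. intros y Hy. apply Hphi, He, Hy. }
rewrite (is_derive_unique _ _ _ (Hpsi x Hx)).
apply (is_derive_ext_loc phi). 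
{ destruct (loc_U x Hx) as [eps He]. exists eps. intros y Hy. symmetry. apply Hphi, He, Hy. }
apply Hpsi, Hx.
Qed.

Definition h (x : R) := sin (x * PI).

Lemma Dn_h n : Derive_n h n = fun x => PI ^ n * sin (x * PI + INR n * (PI / 2)).
Proof.
induction n as [|n IH].
- apply functional_extensionality. intros x. simpl. unfold h. rewrite Rmult_0_l, Rplus_0_r, Rmult_1_l. reflexivity.
- apply functional_extensionality. intros x. change (Derive_n h (S n) x) with (Derive (Derive_n h n) x). rewrite IH.
  apply is_derive_unique. auto_derive. easy.
  rewrite S_INR.
  replace (x * PI + (INR n + 1) * (PI / 2)) with ((x * PI + INR n * (PI / 2)) + PI / 2) by ring.
  rewrite sin_plus, sin_PI2, cos_PI2. simpl. ring.
Qed.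

Lemma is_derive_sum (G G' : nat -> R -> R) n x :
  (forall i, (i <= n)%nat -> is_derive (G i) x (G' i x)) ->
  is_derive (fun y => sum_f_R0 (fun i => G i y) n) x (sum_f_R0 (fun i => G' i x) n).
Proof.
induction n as [|n IH]; intros H; simpl.
- apply H. lia.
- apply (is_derive_plus (fun y => sum_f_R0 (fun i => G i y) n) (G (S n))).
  apply IH. intros; apply H; lia. apply H; lia.
Qed.

From mathcomp Require Import all_boot all_order all_algebra.
From mathcomp Require Import Rstruct.
From mathcomp Require Import ring lra zify.
Import Order.TTheory GRing.Theory Num.Theory.
Open Scope R_scope.

Section Comb.
Local Open Scope ring_scope.

Lemma sumR (f : nat -> R) n : sum_f_R0 f n = \sum_(i < n.+1) f i.
Proof.
elim: n => [|n IH] /=; first by rewrite big_ord_recr big_ord0 /= add0r.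
by rewrite big_ord_recr /= IH.
Qed.

Lemma factE n : Factorial.fact n = n`!.
Proof. elim: n => [|n IH] //=. by rewrite IH factS. Qed.

Variable s : nat -> R.
Let a := bell_arg s.

Lemma ps_pow_poly N m i : (i < N)%N -> ps_pow a m i = ((\poly_(j < N) a j) ^+ m)`_i.
Proof.
elim: m i => [|m IH] i Hi.
  by rewrite expr0 coef1 /=; case: i Hi.
rewrite exprS coefM /= /ps_mul sumR; apply: eq_bigr => j _.
rewrite coef_poly IH; last by apply: leq_ltn_trans Hi; exact: leq_subr.
by rewrite (leq_ltn_trans _ Hi) // -ltnS.
Qed.

Lemma ps_pow_low m i : (i < m)%N -> ps_pow a m i = 0.
Proof.
elim: m i => [|m IH] i Hi //.
rewrite /= /ps_mul sumR big1 // => [[j Hj]] _ /=.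
  case: j Hj => [|j] Hj; first by rewrite /a /=; apply: Rmult_0_l.
  rewrite IH; first exact: Rmult_0_r. rewrite ltnS in Hj. move/ssrnat.ltP: Hj; move/ssrnat.ltP: Hi => *; apply/ssrnat.ltP; lia.
Qed.

Lemma key m n : n.+1%:R * ps_pow a m.+1 n.+1 =
  m.+1%:R * \sum_(i < n.+1) i.+1%:R * a i.+1 * ps_pow a m (n - i).
Proof.
set P := \poly_(j < n.+2) a j.
have := deriv_exp P m.+1; move/(congr1 (fun p : {poly R} => p`_n)).
rewrite coef_deriv coefMn coefM -!ps_pow_poly // => H.
rewrite mulr_natl H mulr_natl; congr (_ *+ _).
apply: eq_bigr => [[i Hi]] _ /=.
rewrite coef_deriv coef_poly ltnS Hi -ps_pow_poly; last first.
  rewrite ltnS in Hi. lia.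
by rewrite mulr_natl.
Qed.

Lemma fnz n : (n`!%:R : R) != 0.
Proof. by rewrite pnatr_eq0 -lt0n fact_gt0. Qed.

Lemma snz n : (n.+1%:R : R) != 0.
Proof. by rewrite pnatr_eq0. Qed.

Lemma bellE n : bell n s = n`!%:R * \sum_(m < n.+1) ps_pow a m n / m`!%:R.
Proof.
rewrite /bell sumR INRE factE; congr (_ * _); apply: eq_bigr => i _.
by rewrite RdivE INRE factE.
Qed.

Lemma aE i : i.+1%:R * a i.+1 = s i.+1 / i`!%:R.
Proof.
have -> : a i.+1 = Rdiv (s i.+1) (INR (Factorial.fact i.+1)) by [].
rewrite RdivE INRE factE factS natrM.
by field; rewrite fnz !(addrC 1) !natr1 !snz.
Qed.

Lemma bell_rec n : bell n.+1 s =
  \sum_(i < n.+1) 'C(n, i)%:R * s i.+1 * bell (n - i) s.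
Proof.
have E : forall i, (i < n.+1)%N -> \sum_(m < (n - i).+1) ps_pow a m (n - i) / m`!%:R
    = \sum_(m < n.+1) ps_pow a m (n - i) / m`!%:R.
  move=> i Hi.
  rewrite (big_ord_widen n.+1 (fun m => ps_pow a m (n - i) / m`!%:R)); last first.
    rewrite ltnS in Hi. lia.
  rewrite big_mkcond /=; apply: eq_bigr => m _.
  case: ifP => // H.
  rewrite ps_pow_low ?mul0r //. move/negbT: H. rewrite -leqNgt. lia.
transitivity (n`!%:R * \sum_(i < n.+1) (s i.+1 / i`!%:R) *
   \sum_(m < n.+1) ps_pow a m (n - i) / m`!%:R).
  rewrite bellE big_ord_recl.
  have -> : ps_pow a 0 n.+1 = 0 by [].
  rewrite mul0r add0r mulr_sumr.
  under [in RHS]eq_bigr => i _ do rewrite mulr_sumr.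
  rewrite [in RHS]exchange_big /= [in RHS]mulr_sumr; apply: eq_bigr => [[m Hm]] _ /=.
  change (ps_mul a (ps_pow a (0 + m)) n.+1) with (ps_pow a m.+1 n.+1).
  under eq_bigr => i _ do rewrite mulrA -aE mulrA.
  rewrite -mulr_suml.
  have K := key m n.
  rewrite (_ : \sum_(i < n.+1) _ = \sum_(i < n.+1) i.+1%:R * a i.+1 * ps_pow a m (n - i)); last by apply: eq_bigr => i _; rewrite -!mulrA.
  set X := \sum_(i < n.+1) _ in K *.
  rewrite -[ps_pow a m.+1 n.+1](mulKf (snz n)) K !factS !natrM.
  by field; rewrite fnz !(addrC 1) !natr1 !snz.
rewrite mulr_sumr; apply: eq_bigr => [[i Hi]] _ /=.
rewrite bellE -E //.
have Hin : (i <= n)%N by rewrite -ltnS.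
rewrite -(bin_fact Hin) !natrM.
by field; rewrite !fnz.
Qed.
Lemma pascal_sum (F : nat -> nat -> R) n :
  \sum_(i < n.+2) 'C(n.+1, i)%:R * F i (n.+1 - i)%N =
  \sum_(i < n.+1) 'C(n, i)%:R * (F i.+1 (n - i)%N + F i (n.+1 - i)%N).
Proof.
rewrite big_ord_recl /= bin0 subn0.
under eq_bigr => i _ do rewrite binS subSS natrD mulrDl.
rewrite big_split /=.
under [in RHS]eq_bigr => i _ do rewrite mulrDr.
rewrite [in RHS]big_split /= [X in _ + X = _]addrC addrCA; congr (_ + _).
rewrite [in RHS]big_ord_recl /= bin0 subn0 [in LHS]big_ord_recr /= bin_small // mul0r addr0.
congr (_ + _); apply: eq_bigr => i _; by rewrite subSS.
Qed.
End Comb.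

Lemma pascal_R (F : nat -> nat -> R) n :
  sum_f_R0 (fun i => INR 'C(n.+1, i) * F i (n.+1 - i)%N) n.+1 =
  sum_f_R0 (fun i => INR 'C(n, i) * (F i.+1 (n - i)%N + F i (n.+1 - i)%N)) n.
Proof.
rewrite !sumR.
under eq_bigr => i _ do rewrite INRE.
under [in RHS]eq_bigr => i _ do rewrite INRE.
exact: pascal_sum.
Qed.
Lemma Dn_h_der j x : is_derive (Derive_n h j) x (Derive_n h (S j) x).
Proof.
apply Derive_correct. rewrite Dn_h. auto_derive. easy.
Qed.

Lemma leib n : forall x, U x -> Derive_n h (S n) x =
  sum_f_R0 (fun i => INR 'C(n, i) * (Derive_n pcot i x * Derive_n h (n - i) x)) n.
Proof.
induction n as [|n IH]; intros x Hx.
- rewrite (Dn_h 1). simpl. unfold pcot, h. unfold U in Hx.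
  rewrite Rmult_1_l sin_plus sin_PI2 cos_PI2. sfield. exact Hx.
- change (Derive_n h (S (S n)) x) with (Derive (Derive_n h (S n)) x).
  rewrite (Derive_ext_loc _ (fun y => sum_f_R0 (fun i => INR 'C(n, i) * (Derive_n pcot i y * Derive_n h (n - i) y)) n)).
  2:{ destruct (loc_U x Hx) as [eps He]. exists eps. intros y Hy. apply IH, He, Hy. }
  apply is_derive_unique.
  have Hd : forall i, (i <= n)%coq_nat -> is_derive (fun y => INR 'C(n, i) * (Derive_n pcot i y * Derive_n h (n - i) y)) x
     (INR 'C(n, i) * (Derive_n pcot (S i) x * Derive_n h (n - i) x + Derive_n pcot i x * Derive_n h (S (n - i)) x)).
  { intros i _. apply is_derive_scal. apply (is_derive_mult (Derive_n pcot i) (Derive_n h (n - i))).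
    apply Dn_f_der, Hx. apply Dn_h_der. intros; apply Rmult_comm. }
  have D := is_derive_sum _ (fun i y => INR 'C(n, i) * (Derive_n pcot (S i) y * Derive_n h (n - i) y + Derive_n pcot i y * Derive_n h (S (n - i)) y)) n x Hd.
  rewrite (pascal_R (fun i j => Derive_n pcot i x * Derive_n h j x)).
  erewrite (Stdlib.Reals.PartSum.sum_eq (fun i => INR (binomial n i) * (Derive_n pcot i.+1 x * Derive_n h (n - i)%N x + Derive_n pcot i x * Derive_n h (n.+1 - i)%N x))); first exact D. intros i Hi.
  simpl. rewrite subSn //. apply/ssrnat.leP; exact Hi.
Qed.

Lemma bell_c k (Hk : U k) n :
  bell n (fun j => Derive_n pcot (j - 1) k) = Derive_n h n k / sin (k * PI).
Proof.
elim/ltn_ind: n => -[|n] IH.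
  rewrite /bell /= /h. unfold U in Hk. sfield. exact Hk.
rewrite bell_rec leib // sumR RdivE mulr_suml.
apply: eq_bigr => -[i Hi] _ /=.
rewrite IH; last by rewrite ltnS leq_subr.
rewrite INRE subn1 /= RdivE RmultE.
rewrite /GRing.mul /= /GRing.inv /=. sfield. exact Hk.
Qed.

Lemma sin_shift j y : sin (y + INR j * PI) = (-1) ^ j * sin y.
Proof.
elim: j => [|j IH]; first by rewrite /= Rmult_0_l Rplus_0_r Rmult_1_l.
rewrite S_INR.
replace (y + (INR j + 1) * PI) with ((y + INR j * PI) + PI) by sring.
rewrite neg_sin IH /=. sring.
Qed.

Lemma cos_shift j y : cos (y + INR j * PI) = (-1) ^ j * cos y.
Proof.
elim: j => [|j IH]; first by rewrite /= Rmult_0_l Rplus_0_r Rmult_1_l.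
rewrite S_INR.
replace (y + (INR j + 1) * PI) with ((y + INR j * PI) + PI) by sring.
rewrite neg_cos IH /=. sring.
Qed.

Theorem lemma2 (k : R) (hk : forall z : Z, k <> IZR z) :
  let nu := fun j : nat => Derive_n pcot (j - 1)%nat k in
  forall j : nat,
    bell (2 * j) nu = (-1) ^ j * PI ^ (2 * j) /\
    bell (2 * j + 1) nu = (-1) ^ j * PI ^ (2 * j + 1) * (cos (k * PI) / sin (k * PI)).
Proof.
have Hk : U k.
  move=> H. have [z Hz] := sin_eq_0_0 _ H. apply: (hk z).
  have HPI := PI_RGT_0.
  apply (Rmult_eq_reg_r PI); [exact Hz | slra].
move=> nu j. rewrite /nu !bell_c // !Dn_h.
have Hs := Hk. unfold U in Hs.
split.
- replace (k * PI + INR (2 * j) * (PI / 2)) with (k * PI + INR j * PI).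
  2:{ rewrite mult_INR. simpl. sfield. }
  rewrite sin_shift. sfield. exact Hs.
- replace (k * PI + INR (2 * j + 1) * (PI / 2)) with ((k * PI + INR j * PI) + PI / 2).
  2:{ rewrite plus_INR mult_INR. simpl. sfield. }
  rewrite sin_plus sin_PI2 cos_PI2 cos_shift. sfield. exact Hs.
Qed.
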